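(* Let $U$ be a commutative supertropical monoid with $M:=eU$. (i) The supertropical monoid $\hat U:=U/E(U,D(U))$ is a semiring. (ii) The ideal compression $\sigma_U:=\pi_{E(U,D(U))}:U\to\hat U$ is universal among all fiber contractions $\alpha:U\to V$ with $V$ a semiring: given such a fiber contraction $\alpha$, there is a unique fiber contraction $\beta:\hat U\to V$ with $\alpha=\beta\circ\sigma_U$ (and if $\alpha$ is a fiber contraction over $M$, so is $\beta$).
   Context: All monoids are commutative. A supertropical monoid is a monoid $(U,\cdot)$ with absorbing element $0$ and distinguished idempotent $e$ with $ex=0\Rightarrow x=0$, together with a total ordering on $M:=eU$, compatible with multiplication and with $0$ least, making $M$ a bipotent semiring (addition $=\max$). Define on $U$: $x+y:=y$ if $ex<ey$, $x$ if $ex>ey$, $ex$ if $ex=ey$; $U$ is a semiring if this addition is associative and distributive. A transmission $\alpha:U\to V$ is a map with $\alpha(0)=0$, $\alpha(1)=1$, multiplicative, $\alpha(e_U)=e_V$, order-preserving on $eU$. A fiber contraction is a surjective transmission whose restriction $eU\to eV$ is an isomorphism; over $M$ if $eV=M$ and that restriction is $\mathrm{id}_M$. An element $x\in U$ is an NC-product if there exist $y,z\in U$ and $y'\in M$ with $x=yz$, $y'<ey$, $y'z=eyz$; $D_0(U)$ is the set of NC-products and $D(U):=D_0(U)\cup M$ (an ideal of $U$ containing $M$). $E(U,D(U))$ is the equivalence relation: $x\sim y$ iff $x=y$, or $x,y\in D(U)$ and $ex=ey$; it is a TE-relation and $U/E(U,D(U))$ carries the unique supertropical monoid structure making the projection $\pi_{E(U,D(U))}$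 a transmission, with ghost ideal identified with $M$. *)

(* Defs.v *)
From Stdlib Require Import ClassicalEpsilon.

Set Implicit Arguments.
Unset Strict Implicit.

(* A (commutative) supertropical monoid.  The total order is only required
   (and only meaningful) on the ghost ideal M = eU = {x | e x = x}. *)
Record STM := {
  car :> Type;
  smul : car -> car -> car;
  sone : car;
  szero : car;
  se : car;
  sle : car -> car -> Prop;
  smulA : forall x y z, smul x (smul y z) = smul (smul x y) z;
  smulC : forall x y, smul x y = smul y x;
  smul1 : forall x, smul sone x = x;
  smul0 : forall x, smul szero x = szero;
  se_idem : smul se se = se;
  se_faith : forall x, smul se x = szero -> x = szero;
  sle_refl : forall a, smul se a = a -> sle a a;
  sle_antisym : forall a b, smul se a = a -> smul se b = b ->
      sle a b -> sle b a -> a = b;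
  sle_trans : forall a b c, smul se a = a -> smul se b = b -> smul se c = c ->
      sle a b -> sle b c -> sle a c;
  sle_total : forall a b, smul se a = a -> smul se b = b -> sle a b \/ sle b a;
  sle_mul : forall a b c, smul se a = a -> smul se b = b -> smul se c = c ->
      sle a b -> sle (smul a c) (smul b c);
  sle_0 : forall a, smul se a = a -> sle szero a
}.

Arguments smul {s} _ _.
Arguments sone {s}.
Arguments szero {s}.
Arguments se {s}.
Arguments sle {s} _ _.

Definition ghost (U : STM) (x : U) : Prop := smul se x = x.

Definition slt (U : STM) (a b : U) : Prop := sle a b /\ a <> b.

Definition sadd (U : STM) (x y : U) : U :=
  if excluded_middle_informative (slt (smul se x) (smul se y)) then y
  else if excluded_middle_informative (slt (smul se y) (smul se x)) then x
  else smul se x.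

Definition is_semiring (U : STM) : Prop :=
  (forall x y z : U, sadd x (sadd y z) = sadd (sadd x y) z) /\
  (forall x y z : U, smul x (sadd y z) = sadd (smul x y) (smul x z)).

Definition transmission (U V : STM) (a : U -> V) : Prop :=
  a szero = szero /\ a sone = sone /\
  (forall x y : U, a (smul x y) = smul (a x) (a y)) /\
  a se = se /\
  (forall x y : U, ghost x -> ghost y -> sle x y -> sle (a x) (a y)).

(* fiber contractions: surjective transmissions whose restriction
   eU -> eV is an isomorphism (of totally ordered monoids / bipotent
   semirings): bijective and an order isomorphism *)
Definition fiber_contraction (U V : STM) (a : U -> V) : Prop :=
  transmission a /\
  (forall v : V, exists u : U, a u = v) /\
  (forall x y : U, ghost x -> ghost y -> a x = a y -> x = y) /\
  (forall w : V, ghost w -> exists x : U, ghost x /\ a x = w) /\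
  (forall x y : U, ghost x -> ghost y -> (sle x y <-> sle (a x) (a y))).

Definition NC_product (U : STM) (x : U) : Prop :=
  exists (y z y' : U), x = smul y z /\ ghost y' /\ slt y' (smul se y) /\
    smul y' z = smul (smul se y) z.

Definition D (U : STM) (x : U) : Prop := NC_product x \/ ghost x.

Definition E_UD (U : STM) (x y : U) : Prop :=
  x = y \/ (D x /\ D y /\ smul se x = smul se y).

(* (Uh, sigma) presents the quotient U / E(U,D(U)) with its supertropical
   structure making the projection a transmission: sigma is a surjective
   transmission whose fibres are exactly the E(U,D(U))-classes. *)
Definition is_ideal_compression (U Uh : STM) (sigma : U -> Uh) : Prop :=
  transmission sigma /\
  (forall w : Uh, exists x : U, sigma x = w) /\
  (forall x y : U, sigma x = sigma y <-> E_UD x y).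

(* Main.v *)
Require Import Defs.
From Stdlib Require Import ClassicalEpsilon.

Section Basics.
Variable U : STM.
Implicit Types x y z a b c : U.

Lemma eE x : smul se (smul se x) = smul se x.
Proof. rewrite smulA, se_idem; reflexivity. Qed.
Lemma ghostE x : ghost (smul se x).
Proof. apply eE. Qed.
Lemma mulE x y : smul x (smul se y) = smul se (smul x y).
Proof. rewrite smulA, (smulC x se), <- smulA; reflexivity. Qed.
Lemma Emul x y : smul (smul se x) y = smul se (smul x y).
Proof. rewrite smulA; reflexivity. Qed.
Lemma slt_irr a : ~ slt a a.
Proof. unfold slt; tauto. Qed.
Lemma slt_trans a b c : ghost a -> ghost b -> ghost c -> slt a b -> slt b c -> slt a c.
Proof.
  intros ga gb gc [h1 n1] [h2 n2]; split.
  - exact (sle_trans ga gb gc h1 h2).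
  - intro; subst. apply n2, sle_antisym; auto.
Qed.
Lemma slt_asym a b : ghost a -> ghost b -> slt a b -> slt b a -> False.
Proof. intros ga gb [h1 n1] [h2 n2]. apply n1, sle_antisym; auto. Qed.
Lemma tri a b : ghost a -> ghost b -> slt a b \/ a = b \/ slt b a.
Proof.
  intros ga gb. destruct (excluded_middle_informative (a = b)); [auto|].
  destruct (sle_total ga gb); [left|right;right]; split; auto.
Qed.
Lemma sadd_lt x y : slt (smul se x) (smul se y) -> sadd x y = y.
Proof. intro h; unfold sadd; destruct excluded_middle_informative; tauto. Qed.
Lemma sadd_gt x y : slt (smul se y) (smul se x) -> sadd x y = x.
Proof.
  intro h; unfold sadd; destruct excluded_middle_informative.
  - exfalso; eapply slt_asym; [apply ghostE|apply ghostE|eauto|eauto].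
  - destruct excluded_middle_informative; tauto.
Qed.
Lemma sadd_eq x y : smul se x = smul se y -> sadd x y = smul se x.
Proof.
  intro h; unfold sadd; rewrite h; destruct (excluded_middle_informative (slt (smul se y) (smul se y))) as [s|]; [exfalso; exact (slt_irr _ s)|]; destruct (excluded_middle_informative (slt (smul se y) (smul se y))) as [s|]; [exfalso; exact (slt_irr _ s)|]; reflexivity. Qed.
End Basics.

Ltac ssimp := repeat match goal with
 | |- context [sadd ?a ?b] => first
    [ rewrite (@sadd_lt _ a b) by (rewrite ?eE; congruence)
    | rewrite (@sadd_gt _ a b) by (rewrite ?eE; congruence)
    | rewrite (@sadd_eq _ a b) by (rewrite ?eE; congruence) ]
 end.

Ltac contra := exfalso; repeat match goal with h: smul se ?a = smul se ?b |- _ =>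
   rewrite h in *; clear h end;
   first [ eapply slt_irr; eassumption
         | eapply slt_asym; [apply ghostE|apply ghostE|eassumption|eassumption]
         | eapply slt_irr; eapply slt_trans; [ | | | eassumption | eassumption ]; apply ghostE
         | eapply slt_asym; [ | | eapply slt_trans; [ | | | eassumption | eassumption ] | eassumption]; apply ghostE ].

Lemma sadd_assoc (U : STM) (x y z : U) : sadd x (sadd y z) = sadd (sadd x y) z.
Proof.
  destruct (tri _ _ _ (ghostE _ x) (ghostE _ y)) as [h1|[h1|h1]];
  destruct (tri _ _ _ (ghostE _ y) (ghostE _ z)) as [h2|[h2|h2]];
  destruct (tri _ _ _ (ghostE _ x) (ghostE _ z)) as [h3|[h3|h3]]; ssimp;
  first [ solve [rewrite ?eE; congruence] | solve [contra] | idtac ].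
Qed.

Lemma sadd_comm (U : STM) (a b : U) : sadd a b = sadd b a.
Proof.
  destruct (tri _ _ _ (ghostE _ a) (ghostE _ b)) as [h|[h|h]]; ssimp; rewrite ?eE; congruence.
Qed.

Lemma EE_mul (U : STM) (x y : U) : smul (smul se y) (smul se x) = smul se (smul x y).
Proof. rewrite Emul, mulE, eE, (smulC y x); reflexivity. Qed.

Lemma half (U : STM) (x y z : U) : slt (smul se y) (smul se z) ->
  (smul se (smul x y) = smul se (smul x z) -> ghost (smul x z)) ->
  smul x z = sadd (smul x y) (smul x z).
Proof.
  intros h H.
  assert (hl : sle (smul se (smul x y)) (smul se (smul x z))).
  { rewrite <- !EE_mul. apply sle_mul; try apply ghostE. apply h. }
  destruct (tri _ _ _ (ghostE _ (smul x y)) (ghostE _ (smul x z))) as [h1|[h1|h1]].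
  - rewrite sadd_lt; auto.
  - rewrite sadd_eq; auto. rewrite h1. symmetry; apply H; auto.
  - exfalso. destruct h1 as [h1 n1]. apply n1, sle_antisym; auto; apply ghostE.
Qed.

Lemma distr_gen (U : STM)
  (H : forall x y z : U, slt (smul se y) (smul se z) ->
        smul se (smul x y) = smul se (smul x z) -> ghost (smul x z))
  (x y z : U) : smul x (sadd y z) = sadd (smul x y) (smul x z).
Proof.
  destruct (tri _ _ _ (ghostE _ y) (ghostE _ z)) as [h|[h|h]].
  - rewrite sadd_lt by auto. apply half; auto. apply H; auto.
  - rewrite sadd_eq by auto. rewrite sadd_eq; rewrite <- !mulE; congruence.
  - rewrite sadd_gt by auto. rewrite sadd_comm. apply half; auto. apply H; auto.
Qed.

Theorem theorem4p5 (U Uh : STM) (sigma : U -> Uh) :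
  is_ideal_compression sigma ->
  (* (i) *)
  is_semiring Uh /\
  (* (ii) *)
  (forall (V : STM) (alpha : U -> V),
     is_semiring V -> fiber_contraction alpha ->
     exists beta : Uh -> V,
       fiber_contraction beta /\
       (forall x : U, alpha x = beta (sigma x)) /\
       (forall beta' : Uh -> V,
          fiber_contraction beta' -> (forall x : U, alpha x = beta' (sigma x)) ->
          forall w : Uh, beta' w = beta w) /\
       (* "over M": with eV identified with M via iota (and e(Uh) identified
          with M via sigma), if alpha is over M then so is beta *)
       (forall iota : U -> V,
          (forall x : U, ghost x -> alpha x = iota x) ->
          forall x : U, ghost x -> beta (sigma x) = iota x)).
Proof.
  intros [[s0 [s1 [smulS [seS smono]]]] [Hsurj Hfib]].
  assert (sig_E : forall x, sigma (smul se x) = smul se (sigma x)).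
  { intro x; rewrite smulS, seS; reflexivity. }
  assert (sig_ghost : forall a, ghost a -> ghost (sigma a)).
  { intros a ga; unfold ghost; rewrite <- sig_E, ga; reflexivity. }
  assert (refl : forall a b, ghost a -> ghost b -> sle (sigma a) (sigma b) -> sle a b).
  { intros a b ga gb h. destruct (sle_total ga gb) as [h'|h']; auto.
    assert (e : sigma a = sigma b).
    { apply sle_antisym; [apply sig_ghost; auto|apply sig_ghost; auto|auto|auto]. }
    apply Hfib in e. destruct e as [e|[_ [_ e]]].
    - subst; apply sle_refl; auto.
    - rewrite ga, gb in e; subst; apply sle_refl; auto. }
  assert (rep : forall w, ghost w -> exists a, ghost a /\ sigma a = w).
  { intros w gw. destruct (Hsurj w) as [x hx]. exists (smul se x); split.
    - apply ghostE.
    - rewrite sig_E, hx; exact gw. }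
  split.
  { split; [apply sadd_assoc|]. apply distr_gen. intros u v w hlt heq.
    destruct (Hsurj u) as [x <-]; destruct (Hsurj v) as [y <-]; destruct (Hsurj w) as [z <-].
    rewrite <- !sig_E in hlt. rewrite <- !smulS, <- !sig_E in heq.
    apply Hfib in heq.
    assert (heq' : smul se (smul x y) = smul se (smul x z)).
    { destruct heq as [e|[_ [_ e]]]; auto. rewrite !eE in e; exact e. }
    assert (hlt' : slt (smul se y) (smul se z)).
    { split.
      - apply refl; try apply ghostE. apply hlt.
      - intro e; apply (proj2 hlt); rewrite e; reflexivity. }
    rewrite <- smulS; unfold ghost; rewrite <- sig_E; apply Hfib.
    right; split; [right; apply ghostE|]; split; [|rewrite eE; reflexivity].
    left. exists z, x, (smul se y). split; [apply smulC|]. split; [apply ghostE|].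
    split; [exact hlt'|].
    rewrite !Emul, (smulC y x), (smulC z x); exact heq'. }
  intros V alpha [Vassoc Vdist] [[a0 [a1 [aM [aE amono]]]] [asurj [ainj [aghost aiso]]]].
  assert (a_E : forall x, alpha (smul se x) = smul se (alpha x)).
  { intro x; rewrite aM, aE; reflexivity. }
  assert (aG : forall x, ghost x -> ghost (alpha x)).
  { intros x gx; unfold ghost; rewrite <- a_E, gx; reflexivity. }
  assert (Dgh : forall x, D x -> ghost (alpha x)).
  { intros x [NC|g]; [|auto].
    destruct NC as (y & z & y' & -> & gy' & hlt & heq).
    assert (ga' : ghost (alpha y')) by auto.
    assert (hlt' : slt (alpha y') (smul se (alpha y))).
    { split.
      - rewrite <- a_E; apply amono; auto; [apply ghostE|apply hlt].
      - intro e; rewrite <- a_E in e; apply ainj in e; auto; [apply (proj2 hlt); exact e|apply ghostE]. }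
    assert (s1' : sadd (alpha y') (alpha y) = alpha y).
    { apply sadd_lt. rewrite ga'; exact hlt'. }
    assert (key : smul (alpha z) (alpha y') = smul se (smul (alpha z) (alpha y))).
    { rewrite <- aM, smulC, heq, Emul, a_E, aM, (smulC (alpha y)); reflexivity. }
    assert (h : smul (alpha z) (alpha y) = sadd (smul (alpha z) (alpha y')) (smul (alpha z) (alpha y))).
    { rewrite <- Vdist, s1'; reflexivity. }
    rewrite sadd_eq in h by (rewrite key, eE; reflexivity).
    rewrite key, eE in h.
    rewrite aM, smulC. unfold ghost. symmetry; exact h. }
  assert (wd : forall x y, sigma x = sigma y -> alpha x = alpha y).
  { intros x y e; apply Hfib in e. destruct e as [e|[Dx [Dy e]]]; [subst; reflexivity|].
    rewrite <- (Dgh x Dx), <- (Dgh y Dy), <- !a_E, e; reflexivity. }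
  assert (exb : exists beta : Uh -> V, forall x, beta (sigma x) = alpha x).
  { exists (fun w => alpha (proj1_sig (constructive_indefinite_description _ (Hsurj w)))).
    intro x; apply wd. exact (proj2_sig (constructive_indefinite_description _ (Hsurj (sigma x)))). }
  destruct exb as [beta key].
  exists beta. split; [|split; [|split]].
  - split; [split; [|split; [|split; [|split]]]|split; [|split; [|split]]].
    + rewrite <- s0, key, a0; reflexivity.
    + rewrite <- s1, key, a1; reflexivity.
    + intros w1 w2. destruct (Hsurj w1) as [x1 <-]; destruct (Hsurj w2) as [x2 <-].
      rewrite <- smulS, !key, aM; reflexivity.
    + rewrite <- seS, key, aE; reflexivity.
    + intros w1 w2 g1 g2 h. destruct (rep w1 g1) as [b1 [gb1 <-]]; destruct (rep w2 g2) as [b2 [gb2 <-]].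
      rewrite !key. apply amono; auto.
    + intro v. destruct (asurj v) as [u <-]. exists (sigma u); apply key.
    + intros w1 w2 g1 g2. destruct (rep w1 g1) as [b1 [gb1 <-]]; destruct (rep w2 g2) as [b2 [gb2 <-]].
      rewrite !key. intro e; f_equal; apply ainj; auto.
    + intros w gw. destruct (aghost w gw) as [x [gx <-]]. exists (sigma x); split; auto.
    + intros w1 w2 g1 g2. destruct (rep w1 g1) as [b1 [gb1 <-]]; destruct (rep w2 g2) as [b2 [gb2 <-]].
      rewrite !key. split; intro h.
      * apply (aiso _ _ gb1 gb2). apply refl; auto.
      * apply smono; auto. apply (aiso _ _ gb1 gb2); exact h.
  - intro x; symmetry; apply key.
  - intros b' _ hb' w. destruct (Hsurj w) as [x <-]. rewrite key, <- hb'; reflexivity.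
  - intros iota hi x gx. rewrite key; apply hi; exact gx.
Qed.
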